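(* Let $\Lambda$ be an infinite index set. Then the Banach space $l_1(\Lambda)$ is not topologically projective in $\mathbf{Nor}$ (and hence not extremely projective in $\mathbf{Nor}$).
   Context: An operator $\tau:F\to E$ is coisometric if $\|\tau\|\le1$ and for each $x\in E$, $\varepsilon>0$ there is $y\in F$ with $\tau(y)=x$, $\|y\|<\|x\|+\varepsilon$. A normed space $P$ is topologically projective in $\mathbf{Nor}$ if for every coisometric operator $\tau:F\to E$ between (not necessarily complete) normed spaces and every bounded $\varphi:P\to E$ there is a bounded $\psi:P\to F$ with $\tau\psi=\varphi$; it is extremely projective in $\mathbf{Nor}$ if moreover for each $\varepsilon>0$ such $\psi$ can be chosen with $\|\psi\|<\|\varphi\|+\varepsilon$. *)

(* Defs.v *)
From Stdlib Require Import Reals Lra List FunctionalExtensionality ProofIrrelevance.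
Open Scope R_scope.

Record NormedSpace : Type := {
  ns_car :> Type;
  ns_zero : ns_car;
  ns_add : ns_car -> ns_car -> ns_car;
  ns_opp : ns_car -> ns_car;
  ns_scal : R -> ns_car -> ns_car;
  ns_norm : ns_car -> R;
  ns_add_assoc : forall x y z, ns_add x (ns_add y z) = ns_add (ns_add x y) z;
  ns_add_comm : forall x y, ns_add x y = ns_add y x;
  ns_add_0 : forall x, ns_add x ns_zero = x;
  ns_add_opp : forall x, ns_add x (ns_opp x) = ns_zero;
  ns_scal_assoc : forall a b x, ns_scal a (ns_scal b x) = ns_scal (a * b) x;
  ns_scal_1 : forall x, ns_scal 1 x = x;
  ns_scal_distr_l : forall a x y, ns_scal a (ns_add x y) = ns_add (ns_scal a x) (ns_scal a y);
  ns_scal_distr_r : forall a b x, ns_scal (a + b) x = ns_add (ns_scal a x) (ns_scal b x);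
  ns_norm_eq0 : forall x, ns_norm x = 0 -> x = ns_zero;
  ns_norm_scal : forall a x, ns_norm (ns_scal a x) = Rabs a * ns_norm x;
  ns_norm_triangle : forall x y, ns_norm (ns_add x y) <= ns_norm x + ns_norm y
}.

Arguments ns_zero {_}.
Arguments ns_add {_} _ _.
Arguments ns_opp {_} _.
Arguments ns_scal {_} _ _.
Arguments ns_norm {_} _.

Definition is_linear {E F : NormedSpace} (f : E -> F) : Prop :=
  (forall x y, f (ns_add x y) = ns_add (f x) (f y)) /\
  (forall a x, f (ns_scal a x) = ns_scal a (f x)).

Definition is_bounded {E F : NormedSpace} (f : E -> F) : Prop :=
  exists C, forall x, ns_norm (f x) <= C * ns_norm x.

Definition op_norm_is {E F : NormedSpace} (f : E -> F) (M : R) : Prop :=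
  is_lub (fun r => exists x, ns_norm x <= 1 /\ r = ns_norm (f x)) M.

Definition coisometric {F E : NormedSpace} (tau : F -> E) : Prop :=
  is_linear tau /\
  (forall y, ns_norm (tau y) <= ns_norm y) /\
  (forall x eps, 0 < eps -> exists y, tau y = x /\ ns_norm y < ns_norm x + eps).

Definition topologically_projective (P : NormedSpace) : Prop :=
  forall (F E : NormedSpace) (tau : F -> E), coisometric tau ->
  forall phi : P -> E, is_linear phi -> is_bounded phi ->
  exists psi : P -> F, is_linear psi /\ is_bounded psi /\
    (forall x, tau (psi x) = phi x).

Definition extremely_projective (P : NormedSpace) : Prop :=
  forall (F E : NormedSpace) (tau : F -> E), coisometric tau ->
  forall phi : P -> E, is_linear phi -> is_bounded phi ->
  forall eps, 0 < eps ->
  exists psi : P -> F, is_linear psi /\ is_bounded psi /\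
    (forall x, tau (psi x) = phi x) /\
    exists a b, op_norm_is psi a /\ op_norm_is phi b /\ a < b + eps.

Definition infinite_type (L : Type) : Prop :=
  ~ exists l : list L, forall x : L, In x l.

Section L1.
Variable L : Type.

Fixpoint lsum (f : L -> R) (l : list L) : R :=
  match l with nil => 0 | x :: l' => Rabs (f x) + lsum f l' end.

Definition summable (f : L -> R) : Prop :=
  exists M, forall l, NoDup l -> lsum f l <= M.

Definition l1car := { f : L -> R | summable f }.

Lemma lsum_nonneg f l : 0 <= lsum f l.
Proof. induction l; simpl; [lra|]. pose proof (Rabs_pos (f a)); lra. Qed.

Lemma lsum_add f g l :
  lsum (fun x => f x + g x) l <= lsum f l + lsum g l.
Proof. induction l; simpl; [lra|]. pose proof (Rabs_triang (f a) (g a)); lra. Qed.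

Lemma lsum_scal a f l : lsum (fun x => a * f x) l = Rabs a * lsum f l.
Proof. induction l; simpl; [ring|]. rewrite IHl, Rabs_mult. ring. Qed.

Lemma lsum_zero l : lsum (fun _ => 0) l = 0.
Proof. induction l; simpl; [reflexivity|]. rewrite IHl, Rabs_R0. ring. Qed.

Lemma summable_zero : summable (fun _ => 0).
Proof. exists 0. intros l _. rewrite lsum_zero. lra. Qed.

Lemma summable_add f g : summable f -> summable g -> summable (fun x => f x + g x).
Proof.
  intros [M HM] [N HN]. exists (M + N). intros l Hl.
  pose proof (lsum_add f g l). pose proof (HM l Hl). pose proof (HN l Hl). lra.
Qed.

Lemma summable_scal a f : summable f -> summable (fun x => a * f x).
Proof.
  intros [M HM]. exists (Rabs a * M). intros l Hl. rewrite lsum_scal.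
  apply Rmult_le_compat_l; [apply Rabs_pos | auto].
Qed.

Definition l1_zero : l1car := exist _ _ summable_zero.
Definition l1_add (f g : l1car) : l1car :=
  exist _ _ (summable_add _ _ (proj2_sig f) (proj2_sig g)).
Definition l1_scal (a : R) (f : l1car) : l1car :=
  exist _ _ (summable_scal a _ (proj2_sig f)).
Definition l1_opp (f : l1car) : l1car := l1_scal (-1) f.

Definition l1set (f : L -> R) (r : R) : Prop :=
  exists l, NoDup l /\ r = lsum f l.

Lemma l1set_bound (f : l1car) : bound (l1set (proj1_sig f)).
Proof.
  destruct f as [f [M HM]]. exists M. intros r [l [Hl ->]]. simpl. auto.
Qed.

Lemma l1set_ne (f : l1car) : exists r, l1set (proj1_sig f) r.
Proof. exists 0. exists nil. split; [constructor | reflexivity]. Qed.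

Definition l1_norm (f : l1car) : R :=
  proj1_sig (completeness _ (l1set_bound f) (l1set_ne f)).

Lemma l1_norm_lub f : is_lub (l1set (proj1_sig f)) (l1_norm f).
Proof. unfold l1_norm. destruct completeness; auto. Qed.

Lemma l1_norm_ub f l : NoDup l -> lsum (proj1_sig f) l <= l1_norm f.
Proof. intros Hl. apply (proj1 (l1_norm_lub f)). exists l; auto. Qed.

Lemma l1_norm_least f M :
  (forall l, NoDup l -> lsum (proj1_sig f) l <= M) -> l1_norm f <= M.
Proof. intros H. apply (proj2 (l1_norm_lub f)). intros r [l [Hl ->]]. auto. Qed.

Lemma l1_ext (f g : l1car) : (forall x, proj1_sig f x = proj1_sig g x) -> f = g.
Proof.
  destruct f as [f Hf], g as [g Hg]; simpl; intros H.
  assert (f = g) by (apply functional_extensionality; auto). subst.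
  f_equal. apply proof_irrelevance.
Qed.

Lemma l1_norm_scal_le a f : l1_norm (l1_scal a f) <= Rabs a * l1_norm f.
Proof.
  apply l1_norm_least. intros l Hl. simpl. rewrite lsum_scal.
  apply Rmult_le_compat_l; [apply Rabs_pos | apply l1_norm_ub; auto].
Qed.

Lemma l1_norm_nonneg f : 0 <= l1_norm f.
Proof.
  pose proof (l1_norm_ub f nil (NoDup_nil _)). simpl in H. lra.
Qed.

Lemma l1_norm_scal a f : l1_norm (l1_scal a f) = Rabs a * l1_norm f.
Proof.
  apply Rle_antisym; [apply l1_norm_scal_le|].
  destruct (Req_dec a 0) as [->|Ha].
  - rewrite Rabs_R0, Rmult_0_l. apply l1_norm_nonneg.
  - assert (E : f = l1_scal (/ a) (l1_scal a f)).
    { apply l1_ext. intros x. simpl. field. auto. }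
    pose proof (l1_norm_scal_le (/ a) (l1_scal a f)) as H.
    rewrite <- E in H. rewrite Rabs_inv in H.
    pose proof (Rabs_pos_lt a Ha).
    apply (Rmult_le_compat_l (Rabs a)) in H; [|lra].
    rewrite <- Rmult_assoc, Rinv_r, Rmult_1_l in H; lra.
Qed.

Lemma l1_norm_eq0 f : l1_norm f = 0 -> f = l1_zero.
Proof.
  intros H. apply l1_ext. intros x. simpl.
  pose proof (l1_norm_ub f (x :: nil)) as Hx.
  assert (NoDup (x :: nil)) by (constructor; [simpl; tauto | constructor]).
  specialize (Hx H0). simpl in Hx. rewrite H in Hx.
  pose proof (Rabs_pos (proj1_sig f x)).
  destruct (Req_dec (proj1_sig f x) 0); auto.
  pose proof (Rabs_pos_lt _ H2). lra.
Qed.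

Lemma l1_norm_triangle f g : l1_norm (l1_add f g) <= l1_norm f + l1_norm g.
Proof.
  apply l1_norm_least. intros l Hl. simpl.
  pose proof (lsum_add (proj1_sig f) (proj1_sig g) l).
  pose proof (l1_norm_ub f l Hl). pose proof (l1_norm_ub g l Hl). lra.
Qed.

Definition l1 : NormedSpace.
Proof.
  refine {| ns_car := l1car; ns_zero := l1_zero; ns_add := l1_add;
            ns_opp := l1_opp; ns_scal := l1_scal; ns_norm := l1_norm;
            ns_norm_eq0 := l1_norm_eq0; ns_norm_scal := l1_norm_scal;
            ns_norm_triangle := l1_norm_triangle |};
  intros; apply l1_ext; intros; simpl; ring.
Defined.

End L1.

(* Main.v *)
Require Import Defs.
From Stdlib Require Import Reals Lra Lia List Classical ClassicalEpsilon FunctionalExtensionality ProofIrrelevance.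
Open Scope R_scope.

Arguments lsum {L} f l.
Arguments l1car L : clear implicits.
Arguments l1_add {L} f g.
Arguments l1_scal {L} a f.
Arguments l1_zero {L}.
Arguments l1_norm {L} f.
Arguments l1_ext {L} f g.
Arguments l1_norm_ub {L} f l.
Arguments l1_norm_least {L} f M.

Definition dlt {T : Type} (y z : T) : R :=
  if excluded_middle_informative (y = z) then 1 else 0.

Lemma dlt_same {T} (y : T) : dlt y y = 1.
Proof. unfold dlt. destruct excluded_middle_informative; [reflexivity| congruence]. Qed.
Lemma dlt_diff {T} (y z : T) : y <> z -> dlt y z = 0.
Proof. intros H. unfold dlt. destruct excluded_middle_informative; [congruence|reflexivity]. Qed.

Lemma lsum_ext {T} (f g : T -> R) l : (forall z, In z l -> f z = g z) -> lsum f l = lsum g l.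
Proof. induction l; simpl; intros H; [reflexivity|]. rewrite H, IHl; auto. Qed.

Lemma lsum_zero_on {T} (f : T -> R) l : (forall z, In z l -> f z = 0) -> lsum f l = 0.
Proof. intros H. rewrite (lsum_ext f (fun _ => 0)); auto. apply lsum_zero. Qed.

Lemma lsum_delta {T} (y : T) c l : NoDup l -> lsum (fun z => c * dlt y z) l <= Rabs c.
Proof.
  induction l as [|a l IH]; simpl; intros Hn.
  - apply Rabs_pos.
  - inversion Hn; subst. destruct (classic (y = a)) as [<-|Hya].
    + rewrite dlt_same, Rmult_1_r. rewrite lsum_zero_on; [lra|].
      intros z Hz. rewrite dlt_diff; [ring|]. intros ->; contradiction.
    + rewrite dlt_diff by auto. rewrite Rmult_0_r, Rabs_R0. specialize (IH H2). lra.
Qed.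

Lemma l1_norm_zero {L} : l1_norm (@l1_zero L) = 0.
Proof.
  apply Rle_antisym; [|apply l1_norm_nonneg].
  apply l1_norm_least. intros l _. simpl. rewrite lsum_zero. lra.
Qed.

Lemma summable_delta {T} (y : T) c : summable T (fun z => c * dlt y z).
Proof. exists (Rabs c). intros l Hl. apply lsum_delta; auto. Qed.

Definition l1_delta {T} (y : T) (c : R) : l1car T := exist _ _ (summable_delta y c).

Lemma l1_delta_norm {T} (y : T) c : l1_norm (l1_delta y c) <= Rabs c.
Proof. apply l1_norm_least. intros l Hl. apply lsum_delta; auto. Qed.

Lemma coef_bound {T} (f : l1car T) z : Rabs (proj1_sig f z) <= l1_norm f.
Proof.
  pose proof (l1_norm_ub f (z :: nil)) as H.
  assert (NoDup (z :: nil)) by (constructor; [simpl; tauto | constructor]).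
  specialize (H H0). simpl in H. lra.
Qed.

(** * The free normed space over E = l1 L *)
Section Free.
Variable L : Type.
Notation E := (l1car L).

Inductive Rrel : (E -> R) -> E -> Prop :=
| Rr0 : Rrel (fun _ => 0) l1_zero
| Rrs : forall w x y c, Rrel w x -> y <> l1_zero ->
    Rrel (fun z => w z + c * dlt y z) (l1_add x (l1_scal (c / l1_norm y) y)).

Lemma Rrel_eq w x w' x' : Rrel w x -> (forall z, w z = w' z) -> x = x' -> Rrel w' x'.
Proof.
  intros H Hw <-. replace w' with w; auto. apply functional_extensionality; auto.
Qed.

Lemma Rrel_add w1 x1 w2 x2 : Rrel w1 x1 -> Rrel w2 x2 ->
  Rrel (fun z => w1 z + w2 z) (l1_add x1 x2).
Proof.
  intros H1 H2. induction H2.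
  - apply (Rrel_eq _ _ _ _ H1); [intros; ring|]. apply l1_ext; intros; simpl; ring.
  - eapply Rrel_eq. apply (Rrs _ _ y c IHRrel H).
    + intros; simpl; ring.
    + apply l1_ext; intros; simpl; ring.
Qed.

Lemma Rrel_scal a w x : Rrel w x -> Rrel (fun z => a * w z) (l1_scal a x).
Proof.
  intros H. induction H.
  - apply (Rrel_eq _ _ _ _ Rr0); [intros; ring|]. apply l1_ext; intros; simpl; ring.
  - eapply Rrel_eq. apply (Rrs _ _ y (a * c) IHRrel H0).
    + intros; simpl; ring.
    + apply l1_ext; intros; simpl. unfold Rdiv. ring.
Qed.

Fixpoint esumf (w : E -> R) (l : list E) (z : L) : R :=
  match l with
  | nil => 0
  | y :: l' => w y / l1_norm y * proj1_sig y z + esumf w l' z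
  end.

Lemma esumf_out w y c l z : ~ In y l ->
  esumf (fun t => w t + c * dlt y t) l z = esumf w l z.
Proof.
  induction l; simpl; intros H; [reflexivity|].
  rewrite IHl by tauto. rewrite (dlt_diff y a) by (intros ->; tauto). f_equal. unfold Rdiv; ring.
Qed.

Lemma esumf_in w y c l z : NoDup l -> In y l ->
  esumf (fun t => w t + c * dlt y t) l z = esumf w l z + c / l1_norm y * proj1_sig y z.
Proof.
  induction l; simpl; intros Hn H; [contradiction|]. inversion Hn; subst.
  destruct H as [<-|H].
  - rewrite esumf_out by auto. rewrite dlt_same. unfold Rdiv; ring.
  - rewrite IHl by auto. rewrite (dlt_diff y a) by (intros ->; tauto). unfold Rdiv; ring.
Qed.

Lemma Rrel_list w x : Rrel w x -> exists l, NoDup l /\ (forall y, In y l -> y <> l1_zero) /\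
  (forall y, w y <> 0 -> In y l) /\ (forall z, proj1_sig x z = esumf w l z).
Proof.
  intros H. induction H.
  - exists nil. repeat split; auto; [constructor| intros y Hy; lra].
  - destruct IHRrel as [l [Hn [Hz [Hs Hv]]]].
    destruct (classic (In y l)) as [Hy|Hy].
    + exists l. repeat split; auto.
      * intros t Ht. destruct (classic (y = t)) as [<-|Hyt]; auto.
        apply Hs. rewrite dlt_diff in Ht by auto. lra.
      * intros z. rewrite esumf_in by auto. simpl. rewrite Hv. reflexivity.
    + exists (y :: l). repeat split.
      * constructor; auto.
      * intros t [<-|Ht]; auto.
      * intros t Ht. destruct (classic (y = t)) as [<-|Hyt]; [left; auto|right].
        apply Hs. rewrite dlt_diff in Ht by auto. lra.
      * intros z. simpl. rewrite esumf_out by auto. rewrite dlt_same.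
        assert (w y = 0) by (apply NNPP; intros C; apply Hy; auto).
        rewrite H1, Hv. unfold Rdiv; ring.
Qed.

Lemma esumf_bound w l l' : NoDup l' -> (forall y, In y l -> y <> l1_zero) ->
  lsum (esumf w l) l' <= lsum w l.
Proof.
  intros Hn'. induction l as [|y l IH]; simpl; intros Hz.
  - rewrite lsum_zero. lra.
  - eapply Rle_trans.
    apply (lsum_add L (fun z => w y / l1_norm y * proj1_sig y z) (esumf w l)).
    rewrite lsum_scal.
    assert (Hy : y <> l1_zero) by auto.
    assert (Hp : 0 < l1_norm y).
    { destruct (l1_norm_nonneg L y) as [|E0]; auto. symmetry in E0; apply l1_norm_eq0 in E0. contradiction. }
    pose proof (l1_norm_ub y l' Hn').
    assert (Rabs (w y / l1_norm y) * lsum (proj1_sig y) l' <= Rabs (w y)).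
    { unfold Rdiv. rewrite Rabs_mult, Rabs_inv, (Rabs_right (l1_norm y)) by lra.
      apply Rle_trans with (Rabs (w y) * / l1_norm y * l1_norm y); [|right; field; lra].
      apply Rmult_le_compat_l; auto.
      apply Rmult_le_pos; [apply Rabs_pos| left; apply Rinv_0_lt_compat; lra]. }
    specialize (IH (fun t Ht => Hz t (or_intror Ht))). lra.
Qed.

Definition Fc := { p : l1car E * E | Rrel (proj1_sig (fst p)) (snd p) }.

Definition F_zero : Fc := exist _ (l1_zero, l1_zero) Rr0.
Definition F_add (p q : Fc) : Fc :=
  exist _ (l1_add (fst (proj1_sig p)) (fst (proj1_sig q)), l1_add (snd (proj1_sig p)) (snd (proj1_sig q)))
    (Rrel_add _ _ _ _ (proj2_sig p) (proj2_sig q)).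
Definition F_scal (a : R) (p : Fc) : Fc :=
  exist _ (l1_scal a (fst (proj1_sig p)), l1_scal a (snd (proj1_sig p)))
    (Rrel_scal a _ _ (proj2_sig p)).
Definition F_opp (p : Fc) : Fc := F_scal (-1) p.
Definition F_norm (p : Fc) : R := l1_norm (fst (proj1_sig p)).

Lemma F_ext (p q : Fc) : fst (proj1_sig p) = fst (proj1_sig q) ->
  snd (proj1_sig p) = snd (proj1_sig q) -> p = q.
Proof.
  destruct p as [[a b] H], q as [[c d] H']; simpl; intros -> ->.
  f_equal. apply proof_irrelevance.
Qed.

Lemma F_norm_eq0 p : F_norm p = 0 -> p = F_zero.
Proof.
  destruct p as [[w x] H]. unfold F_norm; simpl. intros Hn. apply l1_norm_eq0 in Hn. subst w.
  apply F_ext; simpl; auto.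
  destruct (Rrel_list _ _ H) as [l [_ [_ [_ Hv]]]].
  apply l1_ext. intros z. rewrite Hv. simpl. clear. induction l; simpl; auto.
  rewrite IHl. unfold Rdiv; ring.
Qed.

Definition Fsp : NormedSpace.
Proof.
  refine {| ns_car := Fc; ns_zero := F_zero; ns_add := F_add;
            ns_opp := F_opp; ns_scal := F_scal; ns_norm := F_norm;
            ns_norm_eq0 := F_norm_eq0 |}.
  all: try (intros; apply F_ext; apply l1_ext; intros; simpl; ring).
  - intros. unfold F_norm. simpl. apply l1_norm_scal.
  - intros. unfold F_norm. simpl. apply l1_norm_triangle.
Defined.

Definition tau (p : Fsp) : l1 L := snd (proj1_sig p).

Lemma tau_coiso : coisometric tau.
Proof.
  split; [split; intros; reflexivity|]. split.
  - intros [[w x] H]. unfold tau; simpl. change (l1_norm x <= l1_norm w).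
    destruct (Rrel_list _ _ H) as [l [Hn [Hz [_ Hv]]]].
    apply l1_norm_least. intros l' Hl'.
    rewrite (lsum_ext _ (esumf (proj1_sig w) l)) by auto.
    eapply Rle_trans; [apply esumf_bound; auto|]. apply l1_norm_ub; auto.
  - intros x eps Heps. destruct (classic (x = l1_zero)) as [->|Hx].
    + exists F_zero. split; [reflexivity|]. simpl. unfold F_norm; simpl.
      rewrite !l1_norm_zero. lra.
    + assert (Hr : Rrel (proj1_sig (l1_delta x (l1_norm x))) x).
      { eapply Rrel_eq. apply (Rrs _ _ x (l1_norm x) Rr0 Hx).
        - intros; simpl; ring.
        - apply l1_ext; intros; simpl.
          assert (0 < l1_norm x).
          { destruct (l1_norm_nonneg L x) as [|E0]; auto. symmetry in E0; apply l1_norm_eq0 in E0. contradiction. }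
          field. lra. }
      exists (exist _ (l1_delta x (l1_norm x), x) Hr). split; [reflexivity|].
      simpl. unfold F_norm; simpl. pose proof (l1_delta_norm x (l1_norm x)).
      rewrite Rabs_right in H by (apply Rle_ge, l1_norm_nonneg). change (l1_norm (l1_delta x (l1_norm x)) < l1_norm x + eps). lra.
Qed.

End Free.
Fixpoint in_span {T : Type} (S : list (T -> R)) (v : T -> R) : Prop :=
  match S with
  | nil => forall w, v w = 0
  | y :: S' => exists c s, in_span S' s /\ forall w, v w = c * y w + s w
  end.

Lemma in_span_ext {T} (S : list (T -> R)) v v' : in_span S v -> (forall w, v w = v' w) -> in_span S v'.
Proof.
  destruct S; simpl; intros H He.
  - intros w. rewrite <- He; auto.
  - destruct H as [c [s [H1 H2]]]. exists c, s. split; auto. intros w; rewrite <- He; auto.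
Qed.

Lemma in_span_zero {T} (S : list (T -> R)) v : (forall w, v w = 0) -> in_span S v.
Proof.
  induction S; simpl; intros H; auto.
  exists 0, v. split; [apply IHS; auto|]. intros; ring.
Qed.

Lemma in_span_add {T} (S : list (T -> R)) u v : in_span S u -> in_span S v ->
  in_span S (fun w => u w + v w).
Proof.
  revert u v. induction S; simpl; intros u v Hu Hv.
  - intros w; rewrite Hu, Hv; ring.
  - destruct Hu as [c [s [H1 H2]]], Hv as [c' [s' [H1' H2']]].
    exists (c + c'), (fun w => s w + s' w). split; auto.
    intros w; rewrite H2, H2'; ring.
Qed.

Lemma in_span_scal {T} (S : list (T -> R)) a v : in_span S v -> in_span S (fun w => a * v w).
Proof.
  revert v. induction S; simpl; intros v Hv.
  - intros w; rewrite Hv; ring.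
  - destruct Hv as [c [s [H1 H2]]]. exists (a * c), (fun w => a * s w). split; auto.
    intros w; rewrite H2; ring.
Qed.

Lemma in_span_elem {T} (S : list (T -> R)) y : In y S -> in_span S y.
Proof.
  induction S; simpl; intros H; [contradiction|]. destruct H as [<-|H].
  - exists 1, (fun _ => 0). split; [apply in_span_zero; auto|]. intros; ring.
  - exists 0, y. split; auto. intros; ring.
Qed.

Lemma in_span_map {T} (y : T -> R) w0 (S : list (T -> R)) s :
  y w0 <> 0 -> in_span S s ->
  in_span (map (fun v w => v w - v w0 / y w0 * y w) S) (fun w => s w - s w0 / y w0 * y w).
Proof.
  intros Hy. revert s. induction S as [|a S IH]; simpl; intros s Hs.
  - intros w; rewrite !Hs. unfold Rdiv; ring.
  - destruct Hs as [c [s' [H1 H2]]]. exists c, (fun w => s' w - s' w0 / y w0 * y w).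
    split; auto. intros w. rewrite !H2. field. auto.
Qed.

Lemma span_basis {T} (HT : infinite_type T) : forall n (S : list (T -> R)) (K : list T),
  length S = n -> ~ (forall z, ~ In z K -> in_span S (dlt z)).
Proof.
  induction n as [|n IH]; intros S K Hlen H.
  - destruct S; [|discriminate]. simpl in H.
    assert (exists z, ~ In z K) as [z Hz].
    { apply NNPP; intros C. apply HT. exists K. intros x. apply NNPP; intros C'. apply C; eauto. }
    specialize (H z Hz z). rewrite dlt_same in H. lra.
  - destruct S as [|y S']; [discriminate|]. simpl in Hlen. injection Hlen as Hlen.
    destruct (classic (forall w, y w = 0)) as [Hy0|Hy].
    + apply (IH S' K Hlen). intros z Hz. destruct (H z Hz) as [c [s [H1 H2]]].
      apply (in_span_ext _ _ _ H1). intros w. rewrite H2, Hy0. ring.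
    + apply not_all_ex_not in Hy. destruct Hy as [w0 Hw0].
      apply (IH (map (fun v w => v w - v w0 / y w0 * y w) S') (w0 :: K)).
      { rewrite length_map; auto. }
      intros z Hz. simpl in Hz.
      destruct (H z (fun h => Hz (or_intror h))) as [c [s [H1 H2]]].
      pose proof (in_span_map y w0 S' s Hw0 H1) as Hm.
      apply (in_span_ext _ _ _ Hm). intros w.
      assert (Hc : 0 = c * y w0 + s w0).
      { rewrite <- H2. symmetry. apply dlt_diff. intros ->. apply Hz; auto. }
      rewrite H2. assert (Hc' : c * y w0 = - s w0) by lra.
      assert (c = - s w0 / y w0) by (rewrite <- Hc'; field; auto).
      subst c. field. auto.
Qed.
Section Main.
Variable L : Type.
Hypothesis HL : infinite_type L.
Variable psi : l1 L -> Fsp L.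
Hypothesis Hlin : is_linear psi.
Variable C : R.
Hypothesis HC : 0 < C.
Hypothesis Hbd : forall x, F_norm L (psi x) <= C * l1_norm x.
Hypothesis Hsec : forall x, tau L (psi x) = x.

Notation E := (l1car L).

Definition W (x : E) (z : E) : R := proj1_sig (fst (proj1_sig (psi x))) z.

Lemma W_add x y z : W (l1_add x y) z = W x z + W y z.
Proof.
  unfold W. destruct Hlin as [Ha _].
  exact (f_equal (fun p : Fsp L => proj1_sig (fst (proj1_sig p)) z) (Ha x y)).
Qed.

Lemma W_scal c x z : W (l1_scal c x) z = c * W x z.
Proof.
  unfold W. destruct Hlin as [_ Hs].
  exact (f_equal (fun p : Fsp L => proj1_sig (fst (proj1_sig p)) z) (Hs c x)).
Qed.

Lemma W_bound x z : Rabs (W x z) <= C * l1_norm x.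
Proof. eapply Rle_trans; [apply coef_bound|]. apply Hbd. Qed.

Lemma W_supp x : exists l, forall z, W x z <> 0 -> In z l.
Proof.
  destruct (Rrel_list _ _ _ (proj2_sig (psi x))) as [l [_ [_ [Hs _]]]].
  exists l. exact Hs.
Qed.

Lemma W_span x (S : list E) : (forall z, W x z <> 0 -> In z S) ->
  in_span (map (@proj1_sig _ _) S) (proj1_sig x).
Proof.
  intros HS.
  destruct (Rrel_list _ _ _ (proj2_sig (psi x))) as [l [_ [_ [_ Hv]]]].
  pose proof (Hsec x) as Hx. unfold tau in Hx. rewrite Hx in Hv.
  apply (in_span_ext _ (esumf L (proj1_sig (fst (proj1_sig (psi x)))) l)); [|intros; auto].
  clear Hv. induction l as [|y l IH]; simpl.
  - apply in_span_zero; auto.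
  - apply in_span_add; auto.
    destruct (classic (W x y = 0)) as [H0|H0].
    + apply in_span_zero. intros w. unfold W in H0. rewrite H0. unfold Rdiv; ring.
    + apply in_span_scal. apply in_span_elem. apply in_map. auto.
Qed.

Definition supp_list (x : E) : list E :=
  proj1_sig (constructive_indefinite_description _ (W_supp x)).

Lemma supp_list_spec x z : W x z <> 0 -> In z (supp_list x).
Proof. unfold supp_list. destruct constructive_indefinite_description; simpl; auto. Qed.

Definition ebasis (z : L) : E := l1_delta z 1.

Lemma step (S : list E) : exists z y, W (ebasis z) y <> 0 /\ ~ In y S.
Proof.
  apply NNPP; intros Hn.
  apply (span_basis HL (length (map (@proj1_sig _ _) S)) (map (@proj1_sig _ _) S) nil eq_refl).
  intros z _.
  assert (H : forall y, W (ebasis z) y <> 0 -> In y S).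
  { intros y Hy. apply NNPP; intros Hy'. apply Hn. exists z, y; auto. }
  apply (in_span_ext _ _ _ (W_span _ _ H)). intros w. simpl. ring.
Qed.

Definition pick (S : list E) : { zy : L * E | W (ebasis (fst zy)) (snd zy) <> 0 /\ ~ In (snd zy) S }.
Proof.
  destruct (constructive_indefinite_description _ (step S)) as [z Hz].
  destruct (constructive_indefinite_description _ Hz) as [y Hy].
  exists (z, y). exact Hy.
Defined.

Definition state := (E * R * list E)%type.
Definition sp (s : state) : E := fst (fst s).
Definition sa (s : state) : R := snd (fst s).
Definition sU (s : state) : list E := snd s.
Definition szy (s : state) : L * E := proj1_sig (pick (supp_list (sp s) ++ sU s)).
Definition sm (s : state) : R := Rabs (W (ebasis (fst (szy s))) (snd (szy s))).

Definition next (s : state) : state :=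
  (l1_add (sp s) (l1_scal (sa s) (ebasis (fst (szy s)))),
   Rmin (sa s / 2) (sa s * sm s / (4 * C)),
   sU s ++ supp_list (ebasis (fst (szy s)))).

Fixpoint st (n : nat) : state :=
  match n with O => (l1_zero, 1, nil) | S n => next (st n) end.

Definition P n := sp (st n).
Definition a n := sa (st n).
Definition U n := sU (st n).
Definition lam n := fst (szy (st n)).
Definition yy n := snd (szy (st n)).
Definition m n := sm (st n).

Lemma pick_spec n : W (ebasis (lam n)) (yy n) <> 0 /\ ~ In (yy n) (supp_list (P n) ++ U n).
Proof. unfold lam, yy, szy. exact (proj2_sig (pick _)). Qed.

Lemma m_pos n : 0 < m n.
Proof. unfold m, sm. apply Rabs_pos_lt. apply (pick_spec n). Qed.

Fixpoint a_pos n : 0 < a n.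
Proof.
  destruct n as [|n]; [change (0 < 1); lra|].
  change (0 < Rmin (a n / 2) (a n * m n / (4 * C))).
  pose proof (a_pos n).
  pose proof (m_pos n). apply Rmin_glb_lt; [lra|].
  unfold Rdiv. apply Rmult_lt_0_compat; [apply Rmult_lt_0_compat; auto|].
  apply Rinv_0_lt_compat; lra.
Qed.

Lemma a_half n : a (S n) <= a n / 2.
Proof. unfold a at 1; simpl. apply Rmin_l. Qed.

Lemma a_small n : a (S n) <= a n * m n / (4 * C).
Proof. unfold a at 1; simpl. apply Rmin_r. Qed.

Lemma P_step n : P (S n) = l1_add (P n) (l1_scal (a n) (ebasis (lam n))).
Proof. reflexivity. Qed.

Lemma U_inv n : forall k, (k < n)%nat -> forall y, W (ebasis (lam k)) y <> 0 -> In y (U n).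
Proof.
  induction n; intros k Hk y Hy; [lia|].
  unfold U; simpl. unfold next, sU at 1; simpl. apply in_or_app.
  destruct (Nat.eq_dec k n) as [->|Hkn].
  - right. apply supp_list_spec. exact Hy.
  - left. apply (IHn k); auto. lia.
Qed.

Lemma lam_inj k n : lam k = lam n -> k = n.
Proof.
  intros Heq.
  assert (Hgen : forall k n, (k < n)%nat -> lam k <> lam n).
  { intros k' n' Hlt He. destruct (pick_spec n') as [H1 H2].
    apply H2. apply in_or_app. right. apply (U_inv n' k' Hlt). rewrite He. auto. }
  destruct (Nat.lt_total k n) as [H|[H|H]]; auto.
  - exfalso; apply (Hgen k n H Heq).
  - exfalso; apply (Hgen n k H); auto.
Qed.

Lemma yy_inj k n : yy k = yy n -> k = n.
Proof.
  intros Heq.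
  assert (Hgen : forall k n, (k < n)%nat -> yy k <> yy n).
  { intros k' n' Hlt He. destruct (pick_spec n') as [H1 H2].
    apply H2. apply in_or_app. right. apply (U_inv n' k' Hlt).
    rewrite <- He. apply (pick_spec k'). }
  destruct (Nat.lt_total k n) as [H|[H|H]]; auto.
  - exfalso; apply (Hgen k n H Heq).
  - exfalso; apply (Hgen n k H); auto.
Qed.

Lemma W_P_y n : W (P n) (yy n) = 0.
Proof.
  apply NNPP; intros H. apply (proj2 (pick_spec n)). apply in_or_app. left.
  apply supp_list_spec; auto.
Qed.

Definition g (k : nat) (z : L) : R :=
  match excluded_middle_informative (exists j, (k <= j)%nat /\ lam j = z) with
  | left H => a (proj1_sig (constructive_indefinite_description _ H))
  | right _ => 0
  end.

Lemma g_val k j : (k <= j)%nat -> g k (lam j) = a j.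
Proof.
  intros Hj. unfold g. destruct excluded_middle_informative as [H|H].
  - generalize (proj2_sig (constructive_indefinite_description _ H)).
    generalize (proj1_sig (constructive_indefinite_description _ H)).
    intros j' [_ Hj']. apply lam_inj in Hj'. subst; auto.
  - exfalso; apply H; eauto.
Qed.

Lemma g_zero k z : (forall j, (k <= j)%nat -> lam j <> z) -> g k z = 0.
Proof.
  intros Hn. unfold g. destruct excluded_middle_informative as [H|H]; auto.
  destruct H as [j [Hj Hj']]. exfalso; apply (Hn j); auto.
Qed.

Lemma g_step k z : g k z = a k * dlt (lam k) z + g (S k) z.
Proof.
  destruct (classic (lam k = z)) as [<-|Hz].
  - rewrite dlt_same, g_val by lia. rewrite g_zero; [ring|].
    intros j Hj He. apply lam_inj in He. lia.
  - rewrite dlt_diff by auto. rewrite Rmult_0_r, Rplus_0_l.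
    destruct (classic (exists j, (k <= j)%nat /\ lam j = z)) as [[j [Hj <-]]|Hn].
    + assert (j <> k) by (intros ->; auto). rewrite !g_val by lia. auto.
    + rewrite !g_zero; auto.
      * intros j Hj He. apply Hn; exists j; split; auto; lia.
      * intros j Hj He. apply Hn; exists j; split; auto.
Qed.

Fixpoint hh (k M : nat) (z : L) : R :=
  match M with
  | O => 0
  | S M' => hh k M' z + a (k + M') * dlt (lam (k + M')) z
  end.

Lemma hh_bound k M l : NoDup l -> lsum (hh k M) l + 2 * a (k + M) <= 2 * a k.
Proof.
  intros Hl. induction M.
  - simpl. rewrite lsum_zero, Nat.add_0_r. lra.
  - eapply Rle_trans; [|apply IHM].
    pose proof (lsum_add L (hh k M) (fun z => a (k + M) * dlt (lam (k + M)) z) l) as H1.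
    change (lsum (hh k (S M)) l) with (lsum (fun z => hh k M z + a (k + M) * dlt (lam (k + M)) z) l).
    pose proof (lsum_delta (lam (k + M)) (a (k + M)) l Hl).
    rewrite Rabs_right in H by (left; apply a_pos).
    pose proof (a_half (k + M)). rewrite Nat.add_succ_r. lra.
Qed.

Lemma hh_zero k M z : (forall j, (k <= j < k + M)%nat -> lam j <> z) -> hh k M z = 0.
Proof.
  induction M; intros Hn; simpl; auto.
  rewrite IHM by (intros j Hj; apply Hn; lia).
  rewrite dlt_diff; [ring|]. apply Hn; lia.
Qed.

Lemma hh_val k M j : (k <= j < k + M)%nat -> hh k M (lam j) = a j.
Proof.
  induction M; intros Hj; [lia|]. simpl.
  destruct (Nat.eq_dec j (k + M)) as [->|Hne].
  - rewrite dlt_same. rewrite hh_zero; [ring|].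
    intros j Hj' He. apply lam_inj in He. lia.
  - rewrite IHM by lia. rewrite dlt_diff; [ring|]. intros He. apply lam_inj in He. lia.
Qed.

Lemma g_hh k z : exists M0, forall M, (M0 <= M)%nat -> g k z = hh k M z.
Proof.
  destruct (classic (exists j, (k <= j)%nat /\ lam j = z)) as [[j [Hj <-]]|Hn].
  - exists (S (j - k)). intros M HM. rewrite g_val, hh_val; auto; lia.
  - exists O. intros M _. rewrite g_zero, hh_zero; auto.
    + intros j Hj He. apply Hn; exists j; split; auto; lia.
    + intros j Hj He. apply Hn; exists j; split; auto.
Qed.

Lemma g_hh_list k l : exists M0, forall M, (M0 <= M)%nat -> forall z, In z l -> g k z = hh k M z.
Proof.
  induction l as [|z l IH].
  - exists O. intros M _ z [].
  - destruct IH as [M1 H1]. destruct (g_hh k z) as [M2 H2].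
    exists (Nat.max M1 M2). intros M HM t [<-|Ht].
    + apply H2; lia.
    + apply H1; auto; lia.
Qed.

Lemma g_bound k l : NoDup l -> lsum (g k) l <= 2 * a k.
Proof.
  intros Hl. destruct (g_hh_list k l) as [M0 H].
  rewrite (lsum_ext _ (hh k M0)) by (apply H; lia).
  pose proof (hh_bound k M0 l Hl). pose proof (a_pos (k + M0)). lra.
Qed.

Lemma g_summable k : summable L (g k).
Proof. exists (2 * a k). intros l Hl. apply g_bound; auto. Qed.

Definition gvec k : E := exist _ (g k) (g_summable k).

Lemma gvec_norm k : l1_norm (gvec k) <= 2 * a k.
Proof. apply l1_norm_least. intros l Hl. apply g_bound; auto. Qed.

Lemma decomp n : gvec O = l1_add (P n) (gvec n).
Proof.
  apply l1_ext. intros z. simpl. induction n.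
  - simpl. ring.
  - rewrite IHn. rewrite (g_step n z). simpl. fold (P n). fold (a n). fold (lam n). ring.
Qed.

Lemma W_x_yy n : W (gvec O) (yy n) <> 0.
Proof.
  rewrite (decomp (S n)), W_add, P_step, W_add, W_scal, W_P_y.
  pose proof (W_bound (gvec (S n)) (yy n)) as Hr.
  pose proof (gvec_norm (S n)). pose proof (a_small n). pose proof (a_pos n).
  pose proof (m_pos n).
  assert (Hm : Rabs (W (ebasis (lam n)) (yy n)) = m n) by reflexivity.
  set (w := W (ebasis (lam n)) (yy n)) in *.
  set (r := W (gvec (S n)) (yy n)) in *.
  assert (C * l1_norm (gvec (S n)) <= C * (2 * a (S n))) by (apply Rmult_le_compat_l; lra).
  assert (C * (2 * a (S n)) <= a n * m n / 2).
  { apply Rle_trans with (C * (2 * (a n * m n / (4 * C)))).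
    - apply Rmult_le_compat_l; lra.
    - right. field. lra. }
  intros Hz.
  assert (Ha : Rabs (a n * w) = a n * m n) by (rewrite Rabs_mult, Hm, Rabs_right by lra; reflexivity).
  assert (Hw : a n * w = - r) by lra.
  assert (0 < a n * m n) by (apply Rmult_lt_0_compat; auto).
  rewrite Hw, Rabs_Ropp in Ha. lra.
Qed.

Lemma contradiction_main : False.
Proof.
  set (Sl := supp_list (gvec O)).
  assert (Hin : forall n, In (yy n) Sl) by (intros n; apply supp_list_spec, W_x_yy).
  assert (Hnd : NoDup (map yy (seq 0 (Datatypes.S (length Sl))))).
  { apply NoDup_map_NoDup_ForallPairs; [intros i j _ _; apply yy_inj | apply seq_NoDup]. }
  pose proof (@NoDup_incl_length _ _ Sl Hnd) as H.
  assert (incl (map yy (seq 0 (Datatypes.S (length Sl)))) Sl).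
  { intros y Hy. apply in_map_iff in Hy. destruct Hy as [k [<- _]]. auto. }
  specialize (H H0). rewrite length_map, length_seq in H. lia.
Qed.

End Main.

Lemma not_top_proj (L : Type) (HL : infinite_type L) : ~ topologically_projective (l1 L).
Proof.
  intros Hp.
  destruct (Hp (Fsp L) (l1 L) (tau L) (tau_coiso L) (fun x => x)) as [psi [Hlin [[C0 Hb] Hs]]].
  - split; intros; reflexivity.
  - exists 1. intros x. lra.
  - apply (contradiction_main L HL psi Hlin (Rmax C0 1)).
    + pose proof (Rmax_r C0 1). lra.
    + intros x. eapply Rle_trans; [apply (Hb x)|].
      apply Rmult_le_compat_r; [apply l1_norm_nonneg | apply Rmax_l].
    + exact Hs.
Qed.

Theorem proposition2p5 (L : Type) (HL : infinite_type L) :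
  ~ topologically_projective (l1 L) /\ ~ extremely_projective (l1 L).
Proof.
  split; [apply not_top_proj; auto|].
  intros He. apply (not_top_proj L HL).
  intros F E t Ht phi Hl Hb.
  destruct (He F E t Ht phi Hl Hb 1 Rlt_0_1) as [psi [H1 [H2 [H3 _]]]].
  exists psi; auto.
Qed.
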